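(* If $T$ is a minimal tree with $|T|\ge 18$, then the root of $T$ has exactly two children, and each child of the root has exactly two children.
   Context: A rooted tree $T$ is a finite tree with a distinguished vertex, its root; its order $|T|$ is its number of vertices. For vertices $u,v$, the infimum of $u$ and $v$ is the vertex common to the path from $u$ to the root and the path from $v$ to the root that is furthest from the root. A set $X\subseteq V(T)$ is infima closed if the infimum of any two elements of $X$ lies in $X$. $I(T)$ denotes the number of nonempty infima closed subsets of $V(T)$. For $n\ge1$, $m_n=\min\{I(T): |T|=n\}$; a rooted tree $T$ with $I(T)=m_{|T|}$ is called minimal. *)

(* Defs.v *)
From mathcomp Require Import all_boot.
Set Implicit Arguments. Unset Strict Implicit. Unset Printing Implicit Defensive.

(* Finite rooted trees: a node with a (finite) list of children subtrees.
   The order of children is irrelevant for everything below. *)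
Inductive rtree := Node of seq rtree.

Definition children (t : rtree) : seq rtree := let: Node ts := t in ts.

Fixpoint tree_order (t : rtree) : nat :=
  let: Node ts := t in (sumn (map tree_order ts)).+1.

(* Vertices are identified with their addresses: the root is [::], and
   i :: a is the vertex at address a in the i-th child subtree. *)
Fixpoint verts (t : rtree) : seq (seq nat) :=
  let: Node ts := t in
  [::] :: (fix aux (i : nat) (us : seq rtree) : seq (seq nat) :=
             match us with
             | [::] => [::]
             | u :: us' => map (cons i) (verts u) ++ aux i.+1 us'
             end) 0 ts.

(* The path from vertex a to the root consists of the prefixes of a, so the
   infimum of two vertices is their longest common prefix. *)
Fixpoint infimum (a b : seq nat) : seq nat :=
  match a, b with
  | x :: a', y :: b' => if x == y then x :: infimum a' b' else [::]
  | _, _ => [::]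
  end.

Definition vert (t : rtree) (k : 'I_(size (verts t))) : seq nat :=
  nth [::] (verts t) k.

Definition infima_closed (t : rtree) (X : {set 'I_(size (verts t))}) : bool :=
  [forall i in X, forall j in X,
     infimum (vert i) (vert j) \in [seq vert k | k in X]].

Definition I (t : rtree) : nat :=
  #|[set X : {set 'I_(size (verts t))} | (X != set0) && infima_closed X]|.

(* T is minimal iff I(T) = m_|T| = min { I(T') : |T'| = |T| } *)
Definition minimal_tree (t : rtree) : Prop :=
  forall t' : rtree, tree_order t' = tree_order t -> I t <= I t'.

(* Main.v *)
From HB Require Import structures.
Require Import Defs.
From mathcomp Require Import all_boot zify.
Set Implicit Arguments. Unset Strict Implicit. Unset Printing Implicit Defensive.

Fixpoint blists (n : nat) : seq (seq bool) :=
  if n is n'.+1 then map (cons true) (blists n') ++ map (cons false) (blists n')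
  else [:: [::]].

Lemma mem_blists n m : (m \in blists n) = (size m == n).
Proof.
elim: n m => [|n IH] m.
  by case: m.
rewrite /= mem_cat; case: m => [|b m].
  by apply/orP => -[] /mapP [].
rewrite /= eqSS -IH; case: b.
- rewrite mem_map; last by move=> x y [].
  by case: (m \in blists n) => //=; apply/mapP => -[].
- rewrite (mem_map (f := cons false)); last by move=> x y [].
  have -> : (false :: m \in [seq true :: i | i <- blists n]) = false.
    by apply/mapP => -[].
  by [].
Qed.

Lemma uniq_blists n : uniq (blists n).
Proof.
elim: n => //= n IH; rewrite cat_uniq !map_inj_uniq //; try by move=> x y [].
rewrite IH /= andbT; apply/hasP => -[x /mapP [y _ ->]] /mapP [z _].
done.
Qed.

Lemma count_blists_split (R : pred (seq bool)) n1 n2 :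
  count R (blists (n1 + n2)) =
  sumn [seq count (fun m2 => R (m1 ++ m2)) (blists n2) | m1 <- blists n1].
Proof.
elim: n1 R => [|n1 IH] R /=; first by rewrite addn0.
rewrite count_cat !count_map !IH map_cat sumn_cat -!map_comp.
by [].
Qed.

Definition mX N (X : {set 'I_N}) : seq bool := [seq i \in X | i <- enum 'I_N].

Lemma card_transfer N (R : pred (seq bool)) :
  #|[set X : {set 'I_N} | R (mX X)]| = count R (blists N).
Proof.
rewrite cardsE cardE /enum_mem size_filter.
have -> : count (mem [pred X : {set 'I_N} | R (mX X)]) (Finite.enum {set 'I_N})
   = count R (map (@mX N) (Finite.enum {set 'I_N})) by rewrite count_map.
apply/permP: R; apply: uniq_perm.
- rewrite map_inj_uniq; first by rewrite -enumT enum_uniq.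
  move=> X Y H; apply/setP => i.
  have := congr1 (fun s => nth false s i) H.
  by rewrite /mX !(nth_map i) -?enumT ?size_enum_ord ?ltn_ord // nth_ord_enum.
- exact: uniq_blists.
move=> m; rewrite mem_blists; apply/mapP/idP.
- by move=> [X _ ->]; rewrite /mX -?enumT size_map size_enum_ord.
move=> /eqP Hm; exists [set i : 'I_N | nth false m i]; first by rewrite -enumT mem_enum.
apply: (@eq_from_nth _ false); first by rewrite /mX -?enumT size_map size_enum_ord Hm.
move=> i; rewrite Hm => Hi.
by rewrite /mX -?enumT (nth_map (Ordinal Hi)) ?size_enum_ord // inE -[i]/(val (Ordinal Hi)) nth_ord_enum.
Qed.

Definition infc (S : seq (seq nat)) : bool :=
  all (fun u => all (fun v => infimum u v \in S) S) S.
Definition Qc (S : seq (seq nat)) : bool := (S != [::]) && infc S.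
Definition J (t : rtree) : nat :=
  count (fun m => Qc (mask m (verts t))) (blists (size (verts t))).

Lemma image_vert (t : rtree) (X : {set 'I_(size (verts t))}) :
  [seq vert k | k in X] = mask (mX X) (verts t).
Proof.
rewrite /image_mem /enum_mem filter_mask map_mask /mX -?enumT.
congr mask.
rewrite /vert.
transitivity [seq nth [::] (verts t) i | i <- [seq val k | k <- enum 'I_(size (verts t))]].
  by rewrite -map_comp.
by rewrite val_enum_ord -/(mkseq _ _) mkseq_nth.
Qed.

Lemma I_J t : I t = J t.
Proof.
rewrite /I /J -card_transfer; congr (#|pred_of_set _|); apply/setP => X.
rewrite !inE -image_vert; congr andb.
  by rewrite -cards_eq0 -(size_image (@vert t)); case: (image _ _).
rewrite /infima_closed /infc; set S := [seq vert k | k in X].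
apply/forall_inP/allP.
- move=> H u /imageP [i Hi ->]; apply/allP => v /imageP [j Hj ->].
  exact: (forall_inP (H i Hi) j Hj).
- move=> H i Hi; apply/forall_inP => j Hj.
  have Si : vert i \in S by apply/imageP; exists i.
  have Sj : vert j \in S by apply/imageP; exists j.
  by have /allP := H (vert i) Si; apply.
Qed.

Fixpoint vaux (i : nat) (us : seq rtree) : seq (seq nat) :=
  match us with
  | [::] => [::]
  | u :: us' => map (cons i) (verts u) ++ vaux i.+1 us'
  end.

Lemma verts_node ts : verts (Node ts) = [::] :: vaux 0 ts.
Proof. by []. Qed.

Lemma vaux_head j ts v : v \in vaux j ts -> exists k a, v = k :: a /\ j <= k.
Proof.
elim: ts j => [|u us IH] j //=; rewrite mem_cat => /orP [/mapP [a _ ->]|/IH [k [a [-> H]]]].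
  by exists j, a.
by exists k, a; split => //; apply: ltnW.
Qed.

Lemma inf_same j a b : infimum (j :: a) (j :: b) = j :: infimum a b.
Proof. by rewrite /= eqxx. Qed.
Lemma inf_diff j k a b : j != k -> infimum (j :: a) (k :: b) = [::].
Proof. by move=> /negbTE /= ->. Qed.
Lemma inf_nill v : infimum [::] v = [::].
Proof. by []. Qed.
Lemma inf_nilr v : infimum v [::] = [::].
Proof. by case: v. Qed.

Definition Q0 (S : seq (seq nat)) : bool :=
  all (fun u => all (fun v => infimum u v \in [::] :: S) S) S.

Lemma Qc_root S : Qc ([::] :: S) = Q0 S.
Proof.
rewrite /Qc /infc /Q0 /= mem_head all_predT /=.
apply: eq_all => u /=; by rewrite inf_nilr mem_head.
Qed.

Definition headne j (S2 : seq (seq nat)) :=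
  forall v, v \in S2 -> exists k a, v = k :: a /\ k != j.

Lemma mem_consA j S1 S2 w : headne j S2 ->
  (j :: w \in map (cons j) S1 ++ S2) = (w \in S1).
Proof.
move=> H; rewrite mem_cat mem_map; last by move=> x y [].
case: (w \in S1) => //=; apply/negP => /H [k [a [[<- _]]]].
by rewrite eqxx.
Qed.

Lemma nil_notin j S1 S2 : headne j S2 -> ([::] \in map (cons j) S1 ++ S2) = false.
Proof.
move=> H; rewrite mem_cat; apply/negP => /orP [/mapP [? _] //|/H [k [a [//]]]].
Qed.

Lemma inS2 j S1 S2 u v : headne j S2 -> u \in S2 -> v \in S2 ->
  (infimum u v \in [::] :: map (cons j) S1 ++ S2) = (infimum u v \in [::] :: S2).
Proof.
move=> H /H [k [a [-> Hk]]] /H [k' [b [-> _]]].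
case: (eqVneq k k') => [<-|Hne]; last by rewrite inf_diff // !mem_head.
have E0 : (k :: infimum a b \in [seq j :: i | i <- S1]) = false.
  by apply/negP => /mapP [? _ [E _]]; rewrite E eqxx in Hk.
by rewrite inf_same !in_cons /= mem_cat E0.
Qed.

Lemma Q0_split j S1 S2 : headne j S2 ->
  Q0 (map (cons j) S1 ++ S2) = infc S1 && Q0 S2.
Proof.
move=> H; apply/idP/andP.
- move=> /allP Hall; split.
  + apply/allP => a Ha; apply/allP => b Hb.
    have Ha' : j :: a \in map (cons j) S1 ++ S2 by rewrite mem_cat map_f.
    have Hb' : j :: b \in map (cons j) S1 ++ S2 by rewrite mem_cat map_f.
    have := allP (Hall _ Ha') _ Hb'.
    by rewrite inf_same in_cons /= (mem_consA _ _ H).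
  + apply/allP => u Hu; apply/allP => v Hv.
    have Hu' : u \in map (cons j) S1 ++ S2 by rewrite mem_cat Hu orbT.
    have Hv' : v \in map (cons j) S1 ++ S2 by rewrite mem_cat Hv orbT.
    by have := allP (Hall _ Hu') _ Hv'; rewrite (inS2 _ H).
- move=> [/allP H1 /allP H2]; apply/allP => u; rewrite mem_cat => /orP [/mapP [a Ha ->]|Hu];
    apply/allP => v; rewrite mem_cat => /orP [/mapP [b Hb ->]|Hv].
  + rewrite inf_same in_cons /= (mem_consA _ _ H).
    exact: (allP (H1 _ Ha)).
  + have [k [c [-> Hk]]] := H _ Hv.
    by rewrite inf_diff 1?eq_sym // mem_head.
  + have [k [c [-> Hk]]] := H _ Hu.
    by rewrite inf_diff // mem_head.
  + by rewrite (inS2 _ H) //; exact: (allP (H2 _ Hu)).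
Qed.

Lemma infc_map j S : infc (map (cons j) S) = infc S.
Proof.
rewrite /infc; apply/allP/allP.
- move=> Hall x Hx; apply/allP => y Hy.
  have := allP (Hall _ (map_f (cons j) Hx)) _ (map_f (cons j) Hy).
  rewrite inf_same mem_map //; by move=> ? ? [].
- move=> Hall x /mapP [a' Ha' ->]; apply/allP => y /mapP [b' Hb' ->].
  rewrite inf_same mem_map; last by move=> ? ? [].
  exact: (allP (Hall _ Ha')).
Qed.

Lemma Qc_split j S1 S2 : headne j S2 ->
  Qc (map (cons j) S1 ++ S2) = (Qc S1 && (S2 == [::])) || ((S1 == [::]) && Qc S2).
Proof.
move=> H.
case: S1 => [|a S1]. by rewrite /Qc /=; case: (_ == _). 
case: S2 H => [|v S2] H.
  by rewrite cats0 eqxx andbT /Qc infc_map /= orbF.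
rewrite /= ?andbF /=; apply/negP => /andP [_ /allP Hall].
have Hj : j :: a \in [seq j :: i | i <- a :: S1] ++ v :: S2 by rewrite mem_cat mem_head.
have Hv : v \in [seq j :: i | i <- a :: S1] ++ v :: S2 by rewrite mem_cat mem_head orbT.
have := allP (Hall _ Hj) _ Hv.
have [k [c [E Hk]]] := H v (mem_head _ _).
rewrite E inf_diff 1?eq_sym // -E.
have := nil_notin (a :: S1) H; by rewrite /= => ->.
Qed.

Lemma count_nohas n : count (fun m => ~~ has id m) (blists n) = 1.
Proof.
elim: n => //= n IH; rewrite count_cat !count_map.
rewrite (@eq_count _ _ pred0); last by [].
by rewrite count_pred0 -IH.
Qed.

Lemma count_masknil (V : seq (seq nat)) :
  count (fun m => mask m V == [::]) (blists (size V)) = 1.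
Proof.
rewrite -(count_nohas (size V)); apply: eq_in_count => m.
rewrite mem_blists => /eqP Hm.
by rewrite -size_eq0 size_mask // has_count -leqNgt leqn0.
Qed.

Lemma count_infc t :
  count (fun m => infc (mask m (verts t))) (blists (size (verts t))) = (J t).+1.
Proof.
rewrite /J -addn1 -(count_masknil (verts t)) addnC.
rewrite -(count_predUI (fun m => mask m (verts t) == [::]) (fun m => Qc (mask m (verts t)))).
rewrite (@eq_count _ (predI _ _) pred0) ?count_pred0 ?addn0; last first.
  by move=> m /=; rewrite /Qc; case: eqP.
apply: eq_count => m /=; rewrite /Qc; case: eqP => [->|] //=.
Qed.

Lemma count_andl (T : Type) (b : bool) (q : pred T) s :
  count (fun x => b && q x) s = b * count q s.
Proof. by case: b => /=; rewrite ?mul1n ?mul0n ?count_pred0 //; apply: eq_count. Qed.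

Lemma sum_scale (L : seq (seq bool)) (a : pred (seq bool)) c :
  sumn [seq a m * c | m <- L] = count a L * c.
Proof. by elim: L => //= m L ->; rewrite mulnDl. Qed.

Lemma headne_vaux j ts S : (forall v, v \in S -> v \in vaux j.+1 ts) -> headne j S.
Proof.
move=> H v /H /vaux_head [k [a [-> Hk]]]; exists k, a; split => //.
by rewrite neq_ltn Hk orbT.
Qed.

Lemma mask_split j t ts m1 m2 : size m1 = size (verts t) ->
  mask (m1 ++ m2) (vaux j (t :: ts)) = map (cons j) (mask m1 (verts t)) ++ mask m2 (vaux j.+1 ts).
Proof.
by move=> H; rewrite /= mask_cat ?size_map // map_mask.
Qed.

Lemma F0 ts j :
  count (fun m => Q0 (mask m (vaux j ts))) (blists (size (vaux j ts)))
  = foldr muln 1 (map (fun t => (J t).+1) ts).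
Proof.
elim: ts j => [|t ts IH] j; first by [].
have -> : size (vaux j (t :: ts)) = size (verts t) + size (vaux j.+1 ts)
  by rewrite /= size_cat size_map.
rewrite count_blists_split /= -count_infc -(IH j.+1) -sum_scale.
congr sumn; apply/eq_in_map => m1; rewrite mem_blists => /eqP Hm1.
rewrite -count_andl; apply: eq_count => m2.
rewrite mask_split // Q0_split //; apply: headne_vaux => v; exact: mem_mask.
Qed.

Lemma count_or2 (T : Type) (a b : bool) (p q : pred T) s : ~~ (a && b) ->
  count (fun x => (a && p x) || (b && q x)) s = a * count p s + b * count q s.
Proof.
case: a; case: b => //= _; rewrite ?mul1n ?mul0n ?add0n ?addn0 ?count_pred0 //;
  apply: eq_count => x /=; rewrite ?orbF //.
Qed.

Lemma sum_lin (L : seq (seq bool)) (a b : pred (seq bool)) c :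
  sumn [seq a m * 1 + b m * c | m <- L] = count a L + count b L * c.
Proof.
elim: L => //= m L ->; rewrite mulnDl muln1.
by rewrite !addnA; congr addn; rewrite -!addnA; congr addn; rewrite addnC.
Qed.

Lemma F1 ts j :
  count (fun m => Qc (mask m (vaux j ts))) (blists (size (vaux j ts)))
  = sumn (map J ts).
Proof.
elim: ts j => [|t ts IH] j; first by [].
have -> : size (vaux j (t :: ts)) = size (verts t) + size (vaux j.+1 ts)
  by rewrite /= size_cat size_map.
rewrite count_blists_split /=.
transitivity (sumn [seq Qc (mask m1 (verts t)) * 1 +
                        (mask m1 (verts t) == [::]) * sumn (map J ts) | m1 <- blists (size (verts t))]).
  congr sumn; apply/eq_in_map => m1; rewrite mem_blists => /eqP Hm1.
  rewrite -(count_masknil (vaux j.+1 ts)) -(IH j.+1) -count_or2; last first.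
    by rewrite /Qc; case: (mask m1 (verts t)) => [|? ?]; rewrite ?andbF.
  apply: eq_count => m2.
  rewrite mask_split // Qc_split //; apply: headne_vaux => v; exact: mem_mask.
rewrite sum_lin count_masknil mul1n.
by [].
Qed.

Lemma J_node ts : J (Node ts) = sumn (map J ts) + foldr muln 1 (map (fun t => (J t).+1) ts).
Proof.
rewrite /J verts_node /= count_cat !count_map addnC.
congr addn; last first.
  rewrite -(F0 ts 0); apply: eq_count => m /=; by rewrite Qc_root.
by rewrite -(F1 ts 0).
Qed.

Lemma I_node ts : I (Node ts) = sumn (map I ts) + foldr muln 1 (map (fun t => (I t).+1) ts).
Proof.
rewrite !I_J J_node; congr addn; first by congr sumn; apply: eq_map => t; rewrite I_J.
by congr foldr; apply: eq_map => t; rewrite I_J.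
Qed.

Fixpoint enc (t : rtree) : GenTree.tree unit :=
  let: Node ts := t in GenTree.Node 0 (map enc ts).
Fixpoint dec (g : GenTree.tree unit) : rtree :=
  match g with
  | GenTree.Leaf _ => Node [::]
  | GenTree.Node _ gs => Node (map dec gs)
  end.

Lemma encK : cancel enc dec.
Proof.
suff H : forall n t, tree_order t <= n -> dec (enc t) = t.
  by move=> t; apply: (H _ t (leqnn _)).
elim=> [|n IH] [ts] //= Hn; congr Node.
elim: ts Hn => //= t ts IHts Hn.
rewrite IH; last by move: Hn; rewrite ltnS; apply: leq_trans; rewrite leq_addr.
rewrite IHts //; move: Hn; rewrite !ltnS; apply: leq_trans; exact: leq_addl.
Qed.

HB.instance Definition _ := Countable.copy rtree (can_type encK).

Lemma order_child t ts : t \in ts -> tree_order t < tree_order (Node ts).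
Proof.
elim: ts => //= u us IH; rewrite in_cons => /orP [/eqP ->|/IH H].
  by rewrite ltnS leq_addr.
by apply: (leq_trans H); rewrite ltnS /= leq_addl.
Qed.

Lemma rtree_ind2 (P : rtree -> Prop) :
  (forall ts, (forall t, t \in ts -> P t) -> P (Node ts)) -> forall t, P t.
Proof.
move=> H; suff: forall n t, tree_order t <= n -> P t by move=> K t; apply: (K _ t (leqnn _)).
elim=> [|n IH] [ts] Hn; first by [].
apply: H => t /order_child Ht; apply: IH; rewrite -ltnS; exact: leq_trans Ht Hn.
Qed.

Notation o := tree_order.
Notation L := (Node [::]).
Definition sI (ts : seq rtree) := sumn (map I ts).
Definition pI (ts : seq rtree) := foldr muln 1 (map (fun t => (I t).+1) ts).
Definition f (x y : nat) := x + y + x.+1 * y.+1.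

Lemma I_nodeE ts : I (Node ts) = sI ts + pI ts.
Proof. exact: I_node. Qed.
Lemma sI_cons t ts : sI (t :: ts) = I t + sI ts. Proof. by []. Qed.
Lemma pI_cons t ts : pI (t :: ts) = (I t).+1 * pI ts. Proof. by []. Qed.
Lemma sI_nil : sI [::] = 0. Proof. by []. Qed.
Lemma pI_nil : pI [::] = 1. Proof. by []. Qed.
Lemma sI_cat s1 s2 : sI (s1 ++ s2) = sI s1 + sI s2.
Proof. by rewrite /sI map_cat sumn_cat. Qed.
Lemma pI_cat s1 s2 : pI (s1 ++ s2) = pI s1 * pI s2.
Proof. by elim: s1 => [|t s IH] /=; rewrite ?mul1n // /pI /= -mulnA -IH. Qed.
Lemma o_node ts : o (Node ts) = (sumn (map o ts)).+1. Proof. by []. Qed.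

Lemma I_leaf : I L = 1. Proof. by rewrite I_nodeE. Qed.
Lemma I_two a b : I (Node [:: a; b]) = f (I a) (I b).
Proof. by rewrite I_nodeE /sI /pI /= addn0 muln1 /f. Qed.

Lemma I_pos t : 0 < I t.
Proof.
case: t => ts; rewrite I_nodeE; apply: leq_trans (leq_addl _ _).
rewrite /pI; elim: ts => //= t ts IH; by rewrite muln_gt0 IH.
Qed.

Lemma pI_ge ts : (sI ts).+1 <= pI ts.
Proof.
elim: ts => // t ts IH; rewrite sI_cons pI_cons.
have := I_pos t; nia.
Qed.

Lemma sI_ge ts : size ts <= sI ts.
Proof. elim: ts => //= t ts IH; rewrite sI_cons; have := I_pos t; lia. Qed.

Lemma I_nonleaf ts : ts != [::] -> 3 <= I (Node ts).
Proof.
case: ts => // t ts _; rewrite I_nodeE sI_cons pI_cons.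
have := I_pos t; have := pI_ge ts; nia.
Qed.

Lemma o_pos t : 0 < o t. Proof. by case: t. Qed.

Lemma prodE (s : seq nat) : foldr muln 1 s = \prod_(i <- s) i.
Proof. by elim: s => [|x s IH]; rewrite ?big_nil ?big_cons //= IH. Qed.

Lemma perm_I ts ts' : perm_eq ts ts' -> I (Node ts) = I (Node ts').
Proof.
move=> P; rewrite !I_nodeE /sI /pI (perm_sumn (perm_map I P)) !prodE.
by rewrite (perm_big _ (perm_map _ P)).
Qed.

Lemma perm_o ts ts' : perm_eq ts ts' -> o (Node ts) = o (Node ts').
Proof. by move=> P; rewrite !o_node (perm_sumn (perm_map o P)). Qed.

Lemma notmin T C : minimal_tree T -> o C = o T -> I C < I T -> False.
Proof. by move=> H /H; rewrite leqNgt => /negP. Qed.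

Lemma min_same T T' : minimal_tree T -> o T' = o T -> I T' = I T -> minimal_tree T'.
Proof. by move=> H Ho HI t' Ht'; rewrite HI; apply: H; rewrite Ht'. Qed.

Lemma min_perm ts ts' : minimal_tree (Node ts) -> perm_eq ts ts' -> minimal_tree (Node ts').
Proof. by move=> H P; apply: (min_same H); [rewrite (perm_o P) | rewrite (perm_I P)]. Qed.

Lemma min_child ts t : minimal_tree (Node ts) -> t \in ts -> minimal_tree t.
Proof.
move=> H /perm_to_rem P; have {H} H := min_perm H P.
move=> t' Ho; rewrite leqNgt; apply/negP => Hlt.
apply: (notmin H (C := Node (t' :: rem t ts))).
  by rewrite !o_node /= Ho.
rewrite !I_nodeE !sI_cons !pI_cons.
have := pI_ge (rem t ts); nia.
Qed.

Lemma no_one_child c : minimal_tree (Node [:: c]) -> 3 <= o (Node [:: c]) -> False.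
Proof.
case: c => cs H Ho.
have Hcs : cs != [::] by case: cs Ho H.
apply: (notmin H (C := Node (L :: cs))); first by rewrite !o_node /= addn0.
rewrite [I (Node (L :: _))]I_nodeE [I (Node [:: _])]I_nodeE sI_cons pI_cons I_leaf sI_cons pI_cons sI_nil pI_nil I_nodeE.
have : 0 < size cs by case: cs Hcs {H Ho}.
have := sI_ge cs; lia.
Qed.

Lemma move_lemma s t2 z rest : s != [::] -> I (Node s) <= I t2 ->
  minimal_tree (Node (Node s :: t2 :: z :: rest)) -> False.
Proof.
move=> Hs Hle H.
apply: (notmin H (C := Node (Node (z :: s) :: t2 :: rest))).
  rewrite !o_node /=; lia.
have Hsz : 0 < size s by case: s Hs {H Hle}.
rewrite [I (Node (_ :: _ :: _ :: _))]I_nodeE [I (Node (Node _ :: _ :: _))]I_nodeE.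
rewrite !sI_cons !pI_cons [I (Node (z :: s))]I_nodeE sI_cons pI_cons.
move: Hle; rewrite [I (Node s)]I_nodeE => Hle.
have := leq_trans Hsz (sI_ge s); have := pI_ge s; have := pI_ge rest; have := I_pos z.
move: Hle.
move: (sI s) (pI s) (I t2) (I z) (sI rest) (pI rest) => σ p x2 zv R Q.
move=> Hle Hz HQ Hp Hσ1.
have HQ1 : 0 < Q by lia.
have K1 : x2.+1 <= σ * (x2.+1 * Q).
  apply: leq_trans (leq_pmull _ Hσ1); exact: leq_pmulr.
have K2 : zv * p < zv * (σ * (x2.+1 * Q)) by rewrite ltn_pmul2l; lia.
nia.
Qed.

Lemma pair_lemma rest : 4 <= pI rest -> minimal_tree (Node (L :: L :: L :: rest)) -> False.
Proof.
move=> HQ H.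
apply: (notmin H (C := Node (Node [:: L; L] :: rest))); first by rewrite !o_node /=; lia.
rewrite !I_nodeE !sI_cons !pI_cons I_leaf I_two I_leaf /f; lia.
Qed.

Lemma rot2 S1 ss : 3 <= I S1 -> minimal_tree (Node [:: Node (S1 :: ss); L; L]) -> False.
Proof.
move=> H1 H.
apply: (notmin H (C := Node [:: S1; Node (L :: L :: ss)])); first by rewrite !o_node /=; lia.
rewrite [I (Node [:: _; _])]I_nodeE [I (Node [:: _; _; _])]I_nodeE.
rewrite !sI_cons !pI_cons !sI_nil !pI_nil.
rewrite [I (Node (L :: _))]I_nodeE [I (Node (S1 :: ss))]I_nodeE.
rewrite !sI_cons !pI_cons !I_leaf.
have := pI_ge ss; move: H1.
move: (sI ss) (pI ss) (I S1) => σ V x1 H1 HV.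
have [d ->] : exists d, V = σ.+1 + d by exists (V - σ.+1); lia.
nia.
Qed.

Definition isleaf (t : rtree) : bool := children t == [::].

Lemma filter_leaves ts : filter isleaf ts = nseq (count isleaf ts) L.
Proof. by elim: ts => //= -[[|? ?]] ts ->. Qed.

Lemma perm_split ts :
  perm_eq ts (filter (predC isleaf) ts ++ nseq (count isleaf ts) L).
Proof.
rewrite -filter_leaves perm_sym perm_catC.
by rewrite (perm_filterC isleaf ts).
Qed.

Lemma sI_nseq m : sI (nseq m L) = m.
Proof. by elim: m => //= m IH; rewrite sI_cons IH I_leaf. Qed.
Lemma pI_nseq m : pI (nseq m L) = 2 ^ m.
Proof. by elim: m => //= m IH; rewrite pI_cons IH I_leaf expnS. Qed.
Lemma o_nseq m : sumn (map o (nseq m L)) = m.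
Proof. by elim: m => //= m ->. Qed.

Lemma perm_swap (x y : rtree) s : perm_eq (x :: y :: s) (y :: x :: s).
Proof. by have := perm_catCA [:: x] [:: y] s (y :: x :: s); rewrite /= perm_refl. Qed.

Lemma nonleaf_of t : ~~ isleaf t -> exists s, t = Node s /\ s != [::].
Proof. by case: t => s; exists s. Qed.

Lemma star_case m : 4 <= m -> minimal_tree (Node (nseq m L)) -> m = 4.
Proof.
move=> Hm H; case: (ltngtP m 4) => // Hm4; first lia.
exfalso; have E3 : m = (m - 3).+3 by lia.
rewrite E3 /= in H.
apply: (pair_lemma (rest := nseq (m - 3) L)); last by [].
rewrite pI_nseq; have -> : m - 3 = (m - 5).+2 by lia.
by rewrite !expnS; have := expn_gt0 2 (m - 5); lia.
Qed.

Lemma case_S ss : ss != [::] -> minimal_tree (Node [:: Node ss; L; L]) ->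
  8 <= o (Node [:: Node ss; L; L]) -> False.
Proof.
move=> Hss H Ho.
have HS : minimal_tree (Node ss) by apply: (min_child H); rewrite mem_head.
have P := perm_split ss.
move: P; case E: (filter (predC isleaf) ss) => [|S1 N2] P.
-
  have HS' := min_perm HS P.
  have Hso : o (Node ss) = (count isleaf ss).+1 by rewrite (perm_o P) /= o_nseq.
  have Ho' : o (Node [:: Node ss; L; L]) = (o (Node ss) + 2).+1 by rewrite /=; lia.
  have := star_case _ HS'.
  move=> /(_ ltac:(lia)) E4.
  apply: (notmin H (C := Node [:: Node [:: L; L; L]; Node [:: L; L]])).
    by rewrite Ho' Hso E4.
  rewrite [I (Node [:: Node ss; L; L])]I_nodeE !sI_cons !pI_cons sI_nil pI_nil.
  rewrite (perm_I P) /= E4 I_two !I_nodeE /sI /pI /= !I_leaf /f.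
  by [].
-
  have HS1 : ~~ isleaf S1.
    have : S1 \in filter (predC isleaf) ss by rewrite E mem_head.
    by rewrite mem_filter => /andP [].
  have [s1 [Es1 Hs1]] := nonleaf_of HS1.
  have H' : minimal_tree (Node [:: Node (S1 :: (N2 ++ nseq (count isleaf ss) L)); L; L]).
    apply: (min_same H).
      have Hoss : o (Node ((S1 :: N2) ++ nseq (count isleaf ss) L)) = o (Node ss) by rewrite (perm_o P).
      move: Hoss; rewrite /=; lia.
    have Hiss : I (Node ((S1 :: N2) ++ nseq (count isleaf ss) L)) = I (Node ss) by rewrite (perm_I P).
    rewrite [LHS]I_nodeE [RHS]I_nodeE !sI_cons !pI_cons /=.
    by rewrite Hiss.
  apply: (rot2 _ H'); rewrite Es1; exact: I_nonleaf.
Qed.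

Lemma le2_children ts : minimal_tree (Node ts) -> 8 <= o (Node ts) -> size ts <= 2.
Proof.
move=> H Ho; rewrite leqNgt; apply/negP => Hsz.
have P := perm_split ts.
have Hsize : size ts = size (filter (predC isleaf) ts) + count isleaf ts.
  by rewrite (perm_size P) size_cat size_nseq.
have Hall : all (predC isleaf) (filter (predC isleaf) ts) by apply: filter_all.
move: P Hsize Hall; case: (filter (predC isleaf) ts) => [|t1 [|t2 N']] P Hsize Hall.
-
  have H' := min_perm H P.
  have Hoo : o (Node ts) = (count isleaf ts).+1 by rewrite (perm_o P) /= o_nseq.
  have := star_case _ H'; move=> /(_ ltac:(lia)); lia.
-
  move: Hall => /andP [Ht1 _].
  set l := count isleaf ts in P Hsize.
  have Hl : 2 <= l by rewrite /= in Hsize; lia.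
  case: (ltngtP l 2) => Hl2; first lia.
  + have E3 : l = (l - 3).+3 by lia.
    have P' : perm_eq ts (L :: L :: L :: (t1 :: nseq (l - 3) L)).
      apply: (perm_trans P); rewrite {1}E3 /=.
      have := perm_catCA [:: t1] [:: L; L; L] (nseq (l - 3) L) (L :: L :: L :: t1 :: nseq (l - 3) L).
      by rewrite /= perm_refl.
    apply: (pair_lemma _ (min_perm H P')).
    rewrite pI_cons pI_nseq.
    have [s [-> Hs]] := nonleaf_of Ht1.
    have := I_nonleaf Hs; have := expn_gt0 2 (l - 3); nia.
  + rewrite Hl2 in P.
    have [s [Es Hs]] := nonleaf_of Ht1.
    rewrite Es in P.
    apply: (case_S Hs (min_perm H P)).
    by rewrite -(perm_o P).
-
  move: Hall => /and3P [Ht1 Ht2 _].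
  have [s1 [E1 Hs1]] := nonleaf_of Ht1.
  have [s2 [E2 Hs2]] := nonleaf_of Ht2.
  move: P; case E: (N' ++ nseq (count isleaf ts) L) => [|z rest] P.
    by move: (perm_size P); rewrite /= E /=; lia.
  have P1 : perm_eq ts (t1 :: t2 :: z :: rest) by apply: (perm_trans P); rewrite /= E.
  case: (leqP (I t1) (I t2)) => Hle.
  + rewrite E1 in P1 Hle; exact: (move_lemma Hs1 Hle (min_perm H P1)).
  + have P2 : perm_eq ts (t2 :: t1 :: z :: rest) by apply: (perm_trans P1); rewrite perm_swap.
    rewrite E2 in P2 Hle; exact: (move_lemma Hs2 (ltnW Hle) (min_perm H P2)).
Qed.

Lemma two_children t : minimal_tree t -> 8 <= o t -> exists a b, t = Node [:: a; b].
Proof.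
case: t => ts H Ho.
have := le2_children H Ho.
case: ts H Ho => [|a [|b [|c ts]]] H Ho //= _.
- exfalso; apply: (no_one_child H); lia.
- by exists a, b.
Qed.

Fixpoint iv (t : rtree) : nat :=
  let: Node ts := t in sumn (map iv ts) + foldr muln 1 (map (fun u => (iv u).+1) ts).

Lemma I_iv t : I t = iv t.
Proof.
elim/rtree_ind2: t => ts IH; rewrite I_node /=.
have E : {in ts, I =1 iv} by move=> t /IH.
have E1 : map I ts = map iv ts by apply/eq_in_map.
have E2 : map (fun u => (I u).+1) ts = map (fun u => (iv u).+1) ts.
  by apply/eq_in_map => u Hu; rewrite E.
by rewrite E1 E2.
Qed.

Definition lbv (n : nat) : nat := nth 0 [:: 0; 1; 3; 6; 11; 20; 36; 61; 101] n.
Definition G (os : seq nat) : nat :=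
  sumn (map lbv os) + foldr muln 1 (map (fun k => (lbv k).+1) os).

Fixpoint comps (fuel n : nat) : seq (seq nat) :=
  match fuel with
  | 0 => [:: [::]]
  | fuel'.+1 => if n is 0 then [:: [::]] else
      flatten [seq map (cons k) (comps fuel' (n - k)) | k <- iota 1 n]
  end.

Lemma comps_mem os fuel : all (fun k => 0 < k) os -> size os <= fuel ->
  os \in comps fuel (sumn os).
Proof.
elim: os fuel => [|k os IH] [|fuel] //=.
move=> /andP [Hk Hos] Hsz.
case En: (k + sumn os) => [|n']; first lia.
apply/flattenP; exists (map (cons k) (comps fuel (n'.+1 - k))).
  apply/mapP; exists k => //; rewrite mem_iota; lia.
apply: map_f; have -> : n'.+1 - k = sumn os by lia.
exact: IH.
Qed.

Lemma comps_check :
  all (fun s => all (fun os => lbv s.+1 <= G os) (comps 7 s)) (iota 0 8).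
Proof. by vm_compute. Qed.

Lemma lb t : o t <= 8 -> lbv (o t) <= I t.
Proof.
elim/rtree_ind2: t => ts IH Ho.
have IH' : forall c, c \in ts -> lbv (o c) <= I c.
  move=> c Hc; apply: IH => //; have := order_child Hc; lia.
have Hsum : sumn (map lbv (map o ts)) <= sI ts.
  elim: ts {IH Ho} IH' => //= c cs IHc H'; rewrite sI_cons leq_add //.
    by apply: H'; rewrite mem_head.
  by apply: IHc => c' Hc'; apply: H'; rewrite in_cons Hc' orbT.
have Hprod : foldr muln 1 (map (fun k => (lbv k).+1) (map o ts)) <= pI ts.
  elim: ts {IH Ho Hsum} IH' => //= c cs IHc H'; rewrite pI_cons leq_mul //.
    by apply: H'; rewrite mem_head.
  by apply: IHc => c' Hc'; apply: H'; rewrite in_cons Hc' orbT.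
rewrite I_nodeE; apply: leq_trans (leq_add Hsum Hprod).
have := comps_check; move=> /allP /(_ (sumn (map o ts))).
rewrite mem_iota add0n leq0n => /(_ ltac:(move: Ho; rewrite /=; lia)) /allP.
move=> /(_ (map o ts)); apply.
apply: comps_mem.
- by apply/allP => k /mapP [c _ ->]; exact: o_pos.
- have : size (map o ts) <= sumn (map o ts).
    elim: ts {IH IH' Ho Hsum Hprod} => //= c cs; have := o_pos c; lia.
  move: Ho; rewrite /=; lia.
Qed.

Lemma prune t : 2 <= o t -> exists t', o t' = (o t).-1 /\ I t' <= I t.
Proof.
elim/rtree_ind2: t => [[|c cs]] IH Ho //.
case: c IH Ho => [[|d ds]] IH Ho.
- exists (Node cs); split; first by [].
  rewrite [I (Node (_ :: _))]I_nodeE sI_cons pI_cons I_leaf I_nodeE; lia.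
- have Hc : Node (d :: ds) \in Node (d :: ds) :: cs by rewrite mem_head.
  have [c' [Hoc Hic]] := IH _ Hc (ltac:(rewrite /=; have := o_pos d; lia)).
  exists (Node (c' :: cs)); split.
    rewrite o_node /= Hoc /=; lia.
  rewrite [I (Node (c' :: cs))]I_nodeE [I (Node (Node (d :: ds) :: cs))]I_nodeE !sI_cons !pI_cons.
  apply: leq_add; first by apply: leq_add.
  by apply: leq_mul.
Qed.

Lemma prune_to n k t : o t = k + n -> 1 <= k -> exists t', o t' = k /\ I t' <= I t.
Proof.
elim: n t => [|n IH] t Ho Hk; first by exists t; rewrite Ho addn0.
have [t' [Ho' Hi']] := prune (ltac:(lia) : 2 <= o t).
have [t'' [Ho'' Hi'']] := IH t' (ltac:(rewrite Ho' Ho; lia)) Hk.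
by exists t''; split => //; apply: leq_trans Hi'' Hi'.
Qed.

Lemma big_lb t : 8 <= o t -> 101 <= I t.
Proof.
move=> Ho; have [t' [Ho' Hi']] := @prune_to (o t - 8) 8 t ltac:(lia) isT.
apply: leq_trans Hi'; have := lb (ltac:(lia) : o t' <= 8); by rewrite Ho'.
Qed.

Definition t3 := Node [:: L; L].
Definition t4 := Node [:: L; L; L].
Definition t5 := Node [:: L; L; L; L].
Definition t7 := Node [:: t3; t3].
Definition t8 := Node [:: t4; t3].
Definition t9 := Node [:: t4; t4].
Definition t10 := Node [:: t5; t4].
Definition t11 := Node [:: t5; t5].
Definition t12 := Node [:: t7; t4].
Definition t13 := Node [:: t8; t4].

Definition ut (a : nat) : rtree :=
  match a with
  | 2 => Node [:: L]
  | 3 => t3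
  | 4 => t4
  | 5 => t5
  | 6 => Node [:: t4; L]
  | 7 => t7
  | _ => L
  end.

Definition tt (k : nat) : rtree :=
  match k with
  | 8 => t8 | 9 => t9 | 10 => t10 | 11 => t11 | 12 => t12 | _ => t13
  end.

Definition comp (n : nat) : rtree := Node [:: tt (n - 10); t9].

Lemma ut_check : all (fun a => (o (ut a) == a) && (iv (ut a) <= 61)) (iota 1 7).
Proof. by vm_compute. Qed.

Lemma comp_check :
  all (fun a => all (fun b1 => all (fun b2 =>
     (a + b1 + b2 < 16) ||
     ((o (comp (a + b1 + b2 + 2)) == a + b1 + b2 + 2) &&
      (iv (comp (a + b1 + b2 + 2)) < f (lbv a) (f (lbv b1) (lbv b2)))))
    (iota 1 7)) (iota 1 7)) (iota 1 7).
Proof. by vm_compute. Qed.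

Lemma f_mono x y x' y' : x <= x' -> y <= y' -> f x y <= f x' y'.
Proof. by move=> H1 H2; rewrite /f; apply: leq_add; [apply: leq_add|apply: leq_mul]. Qed.

Lemma fC x y : f x y = f y x.
Proof. by rewrite /f (addnC x y) mulnC. Qed.

Lemma rot A B1 B2 : minimal_tree (Node [:: A; Node [:: B1; B2]]) -> I B1 <= I A.
Proof.
move=> H; rewrite leqNgt; apply/negP => Hlt.
apply: (notmin H (C := Node [:: B1; Node [:: A; B2]])); first by rewrite /=; lia.
rewrite !I_two /f; move: Hlt; move: (I A) (I B1) (I B2) => a b c Hlt; nia.
Qed.

Lemma side A B : minimal_tree (Node [:: A; B]) -> 18 <= o (Node [:: A; B]) ->
  o A <= 7 -> False.
Proof.
move=> H Ho HA7.
have HA : minimal_tree A by apply: (min_child H); rewrite mem_head.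
have HB : minimal_tree B by apply: (min_child H); rewrite !inE eqxx orbT.
have HoB : 8 <= o B by move: Ho; rewrite /=; lia.
have [B1 [B2 EB]] := two_children HB HoB; subst B.
have R1 := rot H.
have H' : minimal_tree (Node [:: A; Node [:: B2; B1]]).
  apply: (min_same H); first by rewrite /=; lia.
  by rewrite !I_two (fC (I B2)).
have R2 := rot H'.
have HuA : I A <= 61.
  have := ut_check => /allP /(_ (o A)); rewrite mem_iota.
  move=> /(_ ltac:(have := o_pos A; lia)) /andP [/eqP Hou Hiu].
  by apply: leq_trans (HA _ Hou) _; rewrite I_iv.
have Hb1 : o B1 <= 7.
  rewrite leqNgt; apply/negP => Hb; have := big_lb Hb; lia.
have Hb2 : o B2 <= 7.
  rewrite leqNgt; apply/negP => Hb; have := big_lb Hb; lia.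
have LA := lb (ltac:(lia) : o A <= 8).
have LB1 := lb (ltac:(lia) : o B1 <= 8).
have LB2 := lb (ltac:(lia) : o B2 <= 8).
have HIT : f (lbv (o A)) (f (lbv (o B1)) (lbv (o B2))) <= I (Node [:: A; Node [:: B1; B2]]).
  by rewrite !I_two; apply: f_mono => //; apply: f_mono.
have Hn : o (Node [:: A; Node [:: B1; B2]]) = o A + o B1 + o B2 + 2 by rewrite /=; lia.
have := comp_check => /allP /(_ (o A)).
rewrite mem_iota => /(_ ltac:(have := o_pos A; lia)) /allP /(_ (o B1)).
rewrite mem_iota => /(_ ltac:(have := o_pos B1; lia)) /allP /(_ (o B2)).
rewrite mem_iota => /(_ ltac:(have := o_pos B2; lia)).
move=> /orP [|/andP [/eqP Hoc Hic]]; first by move: Ho; rewrite Hn; lia.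
apply: (notmin H (C := comp (o A + o B1 + o B2 + 2))); first by rewrite Hoc Hn.
by rewrite I_iv; apply: leq_trans HIT.
Qed.

Theorem lemma3p4 (T : rtree) :
  minimal_tree T -> 18 <= tree_order T ->
  exists a b : rtree,
    children T = [:: a; b] /\
    size (children a) = 2 /\ size (children b) = 2.
Proof.
move=> H Ho.
have [A [B EB]] := two_children H (leq_trans (isT : 8 <= 18) Ho); subst T.
exists A, B; split => //.
have HA : minimal_tree A by apply: (min_child H); rewrite mem_head.
have HB : minimal_tree B by apply: (min_child H); rewrite !inE eqxx orbT.
have HoA : 8 <= o A.
  rewrite leqNgt; apply/negP => HA7; exact: (side H Ho HA7).
have HoB : 8 <= o B.
  rewrite leqNgt; apply/negP => HB7.
  have H' : minimal_tree (Node [:: B; A]).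
    apply: (min_same H); first by rewrite /=; lia.
    by rewrite !I_two fC.
  apply: (side H' _ HB7); move: Ho; rewrite /=; lia.
have [a1 [a2 ->]] := two_children HA HoA.
by have [b1 [b2 ->]] := two_children HB HoB.
Qed.
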